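(* There is a Borel map $d:\{(u,v)\in[0,\infty]^{\mathbb N}\times[0,\infty]^{\mathbb N}\mid\sum_iu(i)=\sum_jv(j)\}\to[0,\infty]^{\mathbb N^2}$ such that for all $(u,v)$ in its domain and all $i,j\in\mathbb N$, $u(i)=\sum_jd(u,v)(i,j)$ and $v(j)=\sum_id(u,v)(i,j)$.
   Context: $[0,\infty]^{\mathbb N}$ and $[0,\infty]^{\mathbb N^2}$ carry their standard product Borel structures. *)

(* Defs.v *)
From HB Require Import structures.
From mathcomp Require Import all_boot all_order all_algebra.
From mathcomp Require Import all_classical all_reals all_analysis measurable_realfun.
Set Implicit Arguments. Unset Strict Implicit. Unset Printing Implicit Defensive.
Import Order.TTheory GRing.Theory Num.Theory.
Local Open Scope classical_set_scope.
Local Open Scope ring_scope.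

Definition pi_sigma (I T : Type) (ST : set (set T)) : set (set (I -> T)) :=
  <<s \bigcup_(i in [set: I]) preimage_set_system setT (fun f : I -> T => f i) ST >>.

Definition prod_sigma (A B : Type) (SA : set (set A)) (SB : set (set B))
  : set (set (A * B)) :=
  <<s preimage_set_system setT fst SA `|` preimage_set_system setT snd SB >>.

(* f, defined on the subset D of X, is measurable for the trace sigma-algebra
   of SX on D and the sigma-algebra SY. *)
Definition measurable_on (X Y : Type) (SX : set (set X)) (SY : set (set Y))
  (D : set X) (f : X -> Y) : Prop :=
  forall B, SY B -> exists A, SX A /\ D `&` f @^-1` B = D `&` A.

(* Borel sets of [0, oo] are the traces of the Borel sets of \bar R. *)
Definition ereal_borel (R : realType) : set (set \bar R) :=
  (measurable : set (set \bar R)).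

Definition bal_dom (R : realType) : set ((nat -> \bar R) * (nat -> \bar R)) :=
  [set uv | (forall i, (0 <= uv.1 i)%E) /\ (forall j, (0 <= uv.2 j)%E) /\
            (\sum_(i <oo) uv.1 i)%E = (\sum_(j <oo) uv.2 j)%E].
Arguments ereal_borel R : clear implicits.
Arguments bal_dom R : clear implicits.

(* Main.v *)
Require Import Defs.
From HB Require Import structures.
From mathcomp Require Import all_boot all_order all_algebra.
From mathcomp Require Import all_classical all_reals all_analysis measurable_realfun.
From mathcomp Require Import lra.
From Stdlib Require Cantor.
Import Order.TTheory GRing.Theory Num.Theory.
Local Open Scope classical_set_scope.
Local Open Scope ring_scope.
Section S.
Variable R : realType.
Definition clamp (x a b : R) := Num.min (Num.max x a) b.
Ltac splitifs := repeat match goal with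
  | |- context [ (?c < ?d)%R ] => is_var c; is_var d; case: (ltP c d) => ?
  end.
Ltac clampt := rewrite /clamp; repeat (rewrite maxElt || rewrite minElt); splitifs; lra.
Lemma clamp_swap (a b c e : R) : a <= b -> c <= e ->
  clamp e a b - clamp c a b = clamp b c e - clamp a c e.
Proof. move=> ab ce; clampt. Qed.
Lemma clamp_le (x y a b : R) : a <= b -> x <= y -> clamp x a b <= clamp y a b.
Proof. move=> ab xy; clampt. Qed.
Lemma clamp_ub (x a b : R) : a <= b -> clamp x a b <= b.
Proof. move=> ab; clampt. Qed.
Lemma clamp_lb (x a b e : R) : 0 <= e -> a <= b -> b - e <= x -> b - e <= clamp x a b.
Proof. move=> e0 ab xe; clampt. Qed.
Lemma clamp_low (x a b : R) : a <= b -> x <= a -> clamp x a b = a.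
Proof. move=> ab xa; clampt. Qed.

Definition w (a : nat -> \bar R) (k : nat) : R :=
  let p := Cantor.of_nat k in
  if a p.1 == +oo%E then 1 else if p.2 == 0%N then Num.max (fine (a p.1)) 0 else 0.
Definition Sp a k : R := \sum_(i < k) w a i.
Definition fk a k (x : R) : R := clamp x (Sp a k) (Sp a k.+1) - Sp a k.
Definition dd' a b k l : R := fk a k (Sp b l.+1) - fk a k (Sp b l).

Definition nonneg (a : nat -> \bar R) := forall i, (0 <= a i)%E.

Lemma w_ge0 a k : 0 <= w a k.
Proof.
rewrite /w; case: ifP => _ //; case: ifP => _ //.
by rewrite le_max lexx orbT.
Qed.

Lemma SpS a k : Sp a k.+1 = Sp a k + w a k.
Proof. by rewrite /Sp big_ord_recr. Qed.

Lemma Sp0 a : Sp a 0 = 0.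
Proof. by rewrite /Sp big_ord0. Qed.

Lemma Sp_ge0 a k : 0 <= Sp a k.
Proof. by apply: sumr_ge0 => i _; exact: w_ge0. Qed.

Lemma Sp_leS a k : Sp a k <= Sp a k.+1.
Proof. by rewrite SpS lerDl w_ge0. Qed.

Lemma fk0 a k : fk a k 0 = 0.
Proof.
rewrite /fk clamp_low ?subrr ?Sp_leS ?Sp_ge0 //.
Qed.

Lemma dd'_ge0 a b k l : 0 <= dd' a b k l.
Proof.
rewrite /dd' /fk subr_ge0 lerD2r clamp_le ?Sp_leS //.
Qed.

Lemma dd'_swap a b k l : dd' a b k l = dd' b a l k.
Proof.
rewrite /dd' /fk.
have := @clamp_swap (Sp a k) (Sp a k.+1) (Sp b l) (Sp b l.+1) (@Sp_leS a k) (@Sp_leS b l).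
lra.
Qed.

Lemma dd'_partial a b k L :   \sum_(l < L) dd' a b k l = fk a k (Sp b L).
Proof.
rewrite -(big_mkord xpredT (fun l => dd' a b k l)).
by rewrite /dd' telescope_sumr // Sp0 fk0 // subr0.
Qed.
Local Open Scope ereal_scope.
Lemma nneseries_sup (u : nat -> \bar R) : (forall n, 0 <= u n) ->
  \sum_(i <oo) u i = ereal_sup (range (fun n => \sum_(0 <= i < n) u i)).
Proof.
move=> u0; apply/cvg_lim => //.
apply/ereal_nondecreasing_cvgn/ereal_nondecreasing_series => n _ _; exact: u0.
Qed.

Lemma Sp_partial a L : \sum_(0 <= i < L) (w a i)%:E = (Sp a L)%:E.
Proof. by rewrite big_mkord sumEFin. Qed.

Lemma dd'_series a b k :   \sum_(i <oo) (w a i)%:E <= \sum_(i <oo) (w b i)%:E ->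
  \sum_(l <oo) (dd' a b k l)%:E = (w a k)%:E.
Proof.
move=> le_ab.
rewrite nneseries_sup; last by move=> n; rewrite lee_fin dd'_ge0.
have -> : (fun n => \sum_(0 <= i < n) (dd' a b k i)%:E) =
          (fun n => (fk a k (Sp b n))%:E).
  by apply/funext => n; rewrite big_mkord sumEFin dd'_partial.
have wk : w a k = (Sp a k.+1 - Sp a k)%R by rewrite SpS; lra.
apply/eqP; rewrite eq_le; apply/andP; split.
  apply: ge_ereal_sup => _ [L _ <-]; rewrite lee_fin wk /fk lerD2r.
  by apply: clamp_ub; exact: Sp_leS.
apply/lee_subgt0Pr => e e0.
have h1 : (Sp a k.+1)%:E <= \sum_(i <oo) (w b i)%:E.
  apply: le_trans le_ab; rewrite -Sp_partial.
  by apply: nneseries_lim_ge => n _ _; rewrite lee_fin w_ge0.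
move: h1; rewrite nneseries_sup; last by move=> n; rewrite lee_fin w_ge0.
have -> : (fun n => \sum_(0 <= i < n) (w b i)%:E) = (fun n => (Sp b n)%:E).
  by apply/funext => n; rewrite Sp_partial.
move=> h1.
have h2 : ((Sp a k.+1 - e)%R)%:E < ereal_sup (range (fun n => (Sp b n)%:E)).
  by apply: lt_le_trans h1; rewrite lte_fin; lra.
have [_ [L _ <-] hL] := ereal_sup_gt h2.
apply: le_trans (ereal_sup_ubound _); last by exists L.
rewrite wk -EFinB lee_fin /fk.
have := @clamp_lb (Sp b L) (Sp a k) (Sp a k.+1) e (ltW e0) (@Sp_leS a k).
rewrite lte_fin in hL; move=> /(_ (ltW hL)); lra.
Qed.
Lemma regroup (h : nat -> \bar R) : (forall k, 0 <= h k) ->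
  \sum_(i <oo) \sum_(n <oo) h (Cantor.to_nat (i, n)) = \sum_(k <oo) h k.
Proof.
move=> h0.
rewrite [RHS]nneseries_esumT //.
rewrite [LHS]nneseries_esumT; last by move=> i /=; apply: nneseries_ge0 => n _ _; exact: h0.
under eq_esum do rewrite nneseries_esumT//.
rewrite esum_esum //.
rewrite (reindex_esum ([set: nat] `*`` fun=> [set: nat]) [set: nat] Cantor.to_nat).
  by apply: eq_esum => -[i n] _.
split.
- by move=> x _.
- by move=> x y _ _ exy; rewrite -(Cantor.cancel_of_to x) exy Cantor.cancel_of_to.
- move=> y _; exists (Cantor.of_nat y) => //; exact: Cantor.cancel_to_of.
Qed.
Lemma series_one : \sum_(n <oo) (1%R : R)%:E = +oo.
Proof.
apply/cvg_lim => //.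
have -> : (fun n => \sum_(0 <= i < n) (1%R : R)%:E) = (fun n => (n%:R : R)%:E).
  apply/funext => n; rewrite sumEFin big_const_nat subn0.
  by rewrite -[in RHS](mulr1 n%:R) -mulr_natl /= iter_addr_0 mulr_natl mulr1.
by apply/cvgenyP.
Qed.

Lemma series_w a i : nonneg a ->
  \sum_(n <oo) (w a (Cantor.to_nat (i, n)))%:E = a i.
Proof.
move=> a0; rewrite /w.
under eq_eseriesr do rewrite Cantor.cancel_of_to /=.
case: eqP => [->|ai]; first exact: series_one.
rewrite nneseries_recl //; last by move=> k _; case: ifP => // _; rewrite lee_fin le_max lexx orbT.
rewrite eseries0 ?adde0 /=; last by move=> k k1 _; case: eqP => // k0; rewrite k0 in k1.
have := a0 i; case: (a i) ai => // r _ r0 /=; rewrite lee_fin in r0.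
by rewrite max_l.
Qed.
Lemma sum_w a : nonneg a -> \sum_(k <oo) (w a k)%:E = \sum_(i <oo) a i.
Proof.
move=> a0; rewrite -regroup; last by move=> k; rewrite lee_fin w_ge0.
by apply: eq_eseriesr => i _; rewrite series_w.
Qed.

Definition Dm (x : (nat -> \bar R) * (nat -> \bar R)) (ij : nat * nat) : \bar R :=
  \sum_(n <oo) \sum_(m <oo)
     (dd' x.1 x.2 (Cantor.to_nat (ij.1, n)) (Cantor.to_nat (ij.2, m)))%:E.

Lemma Dm_props x : bal_dom R x ->
  (forall ij, 0 <= Dm x ij) /\
  (forall i, x.1 i = \sum_(j <oo) Dm x (i, j)) /\
  (forall j, x.2 j = \sum_(i <oo) Dm x (i, j)).
Proof.
case: x => a b [/= a0 [/= b0 eqs]].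
have Ew : \sum_(k <oo) (w a k)%:E = \sum_(k <oo) (w b k)%:E by rewrite !sum_w.
have ge0 k l : 0 <= (dd' a b k l)%:E by rewrite lee_fin dd'_ge0.
split; [|split].
- move=> ij; apply: nneseries_ge0 => n _ _; apply: nneseries_ge0 => m _ _; exact: ge0.
- move=> i /=; rewrite /Dm /=.
  rewrite nneseries_interchange; last first.
    by move=> j n; apply: nneseries_ge0 => m _ _.
  rewrite -(@series_w a i a0); apply: eq_eseriesr => n _.
  rewrite (regroup (fun l => (dd' a b (Cantor.to_nat (i, n)) l)%:E)) //.
  by rewrite dd'_series // Ew.
- move=> j /=; rewrite /Dm /=.
  under eq_eseriesr do rewrite nneseries_interchange //.
  rewrite nneseries_interchange; last first.
    by move=> i m; apply: nneseries_ge0 => n _ _.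
  rewrite -(@series_w b j b0); apply: eq_eseriesr => m _.
  rewrite (regroup (fun k => (dd' a b k (Cantor.to_nat (j, m)))%:E)) //.
  under eq_eseriesr do rewrite dd'_swap //.
  by rewrite dd'_series // Ew.
Qed.
Local Close Scope ereal_scope.
Definition GX : set (set ((nat -> \bar R) * (nat -> \bar R))) :=
  preimage_set_system setT fst (pi_sigma (ereal_borel R)) `|`
  preimage_set_system setT snd (pi_sigma (ereal_borel R)).
Definition XT := g_sigma_algebraType GX.

Lemma mcoord1 i : measurable_fun [set: XT] (fun x : XT => x.1 i).
Proof.
move=> _ B mB; rewrite setTI; apply: sub_sigma_algebra; left.
exists ((fun f : nat -> \bar R => f i) @^-1` B); last by rewrite setTI.
by apply: sub_sigma_algebra; exists i => //; exists B => //; rewrite setTI.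
Qed.

Lemma mcoord2 i : measurable_fun [set: XT] (fun x : XT => x.2 i).
Proof.
move=> _ B mB; rewrite setTI; apply: sub_sigma_algebra; right.
exists ((fun f : nat -> \bar R => f i) @^-1` B); last by rewrite setTI.
by apply: sub_sigma_algebra; exists i => //; exists B => //; rewrite setTI.
Qed.

Section mes.
Variable c : XT -> (nat -> \bar R).
Hypothesis mc : forall i, measurable_fun [set: XT] (fun x => c x i).

Lemma mw k : measurable_fun [set: XT] (fun x => w (c x) k).
Proof.
rewrite /w; case: (Cantor.of_nat k) => i n /=.
apply: measurable_fun_ifT.
- apply: measurable_fun_eqe => //; exact: measurable_cst.
- exact: measurable_cst.
case: (n == 0)%N; last exact: measurable_cst.
apply: measurable_maxr; last exact: measurable_cst.
by apply: (measurableT_comp (f := fine)) => //.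
Qed.

Lemma mSp k : measurable_fun [set: XT] (fun x => Sp (c x) k).
Proof. by apply: measurable_sum => i; exact: mw. Qed.

Lemma mfk k (y : XT -> R) : measurable_fun [set: XT] y ->
  measurable_fun [set: XT] (fun x => fk (c x) k (y x)).
Proof.
move=> my; rewrite /fk /clamp; apply: measurable_funB; last exact: mSp.
apply: measurable_minr; last exact: mSp.
apply: measurable_maxr => //; exact: mSp.
Qed.
End mes.

Lemma mdd k l : measurable_fun [set: XT] (fun x : XT => dd' x.1 x.2 k l).
Proof.
rewrite /dd'; apply: measurable_funB; apply: mfk; try exact: mcoord1;
  apply: mSp; exact: mcoord2.
Qed.

Lemma mDm ij : measurable_fun [set: XT] (fun x : XT => Dm x ij).
Proof.
rewrite /Dm.
apply: (ge0_emeasurable_sum (P := xpredT)).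
  move=> n x _ _; apply: nneseries_ge0 => m _ _.
  by rewrite lee_fin dd'_ge0.
move=> n _; apply: (ge0_emeasurable_sum (P := xpredT)).
  by move=> m x _ _; rewrite lee_fin dd'_ge0.
move=> m _; apply/measurable_EFinP; exact: mdd.
Qed.
End S.

Definition GY (R : realType) : set (set (nat * nat -> \bar R)) :=
  \bigcup_(i in [set: nat * nat])
     preimage_set_system setT (fun f : nat * nat -> \bar R => f i) (ereal_borel R).

Theorem lemma4p17 (R : realType) :
  exists d : (nat -> \bar R) * (nat -> \bar R) -> (nat * nat -> \bar R),
    measurable_on
      (prod_sigma (pi_sigma (ereal_borel R)) (pi_sigma (ereal_borel R)))
      (pi_sigma (ereal_borel R)) (bal_dom R) d /\
    forall uv, bal_dom R uv ->
      (forall ij, (0 <= d uv ij)%E) /\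
      (forall i, uv.1 i = (\sum_(j <oo) d uv (i, j))%E) /\
      (forall j, uv.2 j = (\sum_(i <oo) d uv (i, j))%E).
Proof.
exists (@Dm R); split; last by move=> uv huv; exact: Dm_props.
have mD : measurable_fun [set: XT R]
    ((@Dm R) : XT R -> g_sigma_algebraType (GY R)).
  apply: (@measurability _ _ (XT R) (g_sigma_algebraType (GY R)) setT (@Dm R) (GY R)); first reflexivity.
  move=> _ [S [ij _ [B mB <-]] <-].
  rewrite !setTI.
  have := @mDm R ij measurableT B mB; rewrite setTI; exact.
move=> B hB; exists (@Dm R @^-1` B); split => //.
by have := mD measurableT B hB; rewrite setTI.
Qed.
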